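(* Let $(X,\Sigma)$ be a random pair valued in $\mathcal{X}\times\mathfrak{S}_n$ with $X\sim\mu$. Let $\mathcal{P}=\{\mathcal{C}_1,\dots,\mathcal{C}_K\}$ be a partition of $\mathcal{X}$ into $K\ge1$ measurable cells with $\mu(\mathcal{C}_k)>0$ for all $k$. Let $\mathcal{S}_{\mathcal{P}}$ be the set of rules of the form $s_{\mathcal{P},\bar\sigma}(x)=\sum_{k=1}^K\sigma_k\,\mathbb{I}\{x\in\mathcal{C}_k\}$ with $\bar\sigma=(\sigma_1,\dots,\sigma_K)\in\mathfrak{S}_n^K$. Then the set of minimizers of $\mathcal{R}$ over $\mathcal{S}_{\mathcal{P}}$ consists exactly of the rules $s_{\mathcal{P},\bar\sigma}$ such that, for every $k\in\{1,\dots,K\}$, $\sigma_k$ is a Kemeny median of $P_{\mathcal{C}_k}$. Moreover, $$\min_{s\in\mathcal{S}_{\mathcal{P}}}\mathcal{R}(s)=\sum_{k=1}^K\mu(\mathcal{C}_k)L^*_{P_{\mathcal{C}_k}}.$$ If in addition $P_{\mathcal{C}_k}\in\mathcal{T}$ for $1\le k\le K$, the risk minimizer over $\mathcal{S}_{\mathcal{P}}$ is unique and is given by $s^*_{\mathcal{P}}(x)=\sum_{k=1}^K\sigma^*_{P_{\mathcal{C}_k}}\,\mathbb{I}\{x\in\mathcal{C}_k\}$.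
   Context: $\mathfrak{S}_n$ is the set of permutations of $\{1,\dots,n\}$. The Kendall $\tau$ distance is $d_\tau(\sigma,\sigma')=\sum_{i<j}\mathbb{I}\{(\sigma(i)-\sigma(j))(\sigma'(i)-\sigma'(j))<0\}$. For a distribution $P$ on $\mathfrak{S}_n$: $L_P(\sigma)=\mathbb{E}_{\Sigma\sim P}[d_\tau(\Sigma,\sigma)]$, $L_P^*=\min_\sigma L_P(\sigma)$, and a Kemeny median of $P$ is any minimizer of $L_P$. For a measurable set $\mathcal{C}$ with $\mu(\mathcal{C})>0$, $P_{\mathcal{C}}$ is the conditional distribution of $\Sigma$ given $X\in\mathcal{C}$. $\mathcal{T}$ is the set of strictly stochastically transitive distributions. These are the $P$ whose pairwise probabilities $p_{i,j}=\mathbb{P}_{\Sigma\sim P}\{\Sigma(i)<\Sigma(j)\}$ satisfy (a) $p_{i,j}\ge1/2$ and $p_{j,k}\ge1/2\Rightarrow p_{i,k}\ge1/2$, and (b) $p_{i,j}\ne1/2$ for all $i<j$. For $P\in\mathcal{T}$ the Kemeny median is unique, denoted $\sigma^*_P$. The risk of a measurable rule $s:\mathcal{X}\to\mathfrak{S}_n$ is $\mathcal{R}(s)=\mathbb{E}[d_\tau(s(X),\Sigma)]$. *)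

(* Defs.v *)
From HB Require Import structures.
From mathcomp Require Import all_boot all_order all_algebra all_fingroup.
From mathcomp Require Import all_classical all_reals all_analysis.
Set Implicit Arguments. Unset Strict Implicit. Unset Printing Implicit Defensive.
Import Order.TTheory GRing.Theory Num.Theory.
Local Open Scope classical_set_scope.
Local Open Scope ring_scope.

(* Kendall tau distance on 'S_n (positions 'I_n, ranks s i : 'I_n) *)
Definition dtau (n : nat) (s t : 'S_n) : nat :=
  #|[set ij : 'I_n * 'I_n | (ij.1 < ij.2)%N &&
     (((s ij.1)%:Z - (s ij.2)%:Z) * ((t ij.1)%:Z - (t ij.2)%:Z) < 0)%R]|.

(* A distribution on 'S_n is given by its probability mass function. *)
Definition Lrisk (R : realType) (n : nat) (p : 'S_n -> R) (s : 'S_n) : R :=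
  \sum_(t : 'S_n) p t * (dtau t s)%:R.

Definition Lstar (R : realType) (n : nat) (p : 'S_n -> R) : R :=
  \big[Num.min/Lrisk p 1]_(t : 'S_n) Lrisk p t.

Definition kemeny_median (R : realType) (n : nat) (p : 'S_n -> R) (s : 'S_n) : Prop :=
  forall t : 'S_n, Lrisk p s <= Lrisk p t.

Definition pairwise_prob (R : realType) (n : nat) (p : 'S_n -> R) (i j : 'I_n) : R :=
  \sum_(t : 'S_n | (t i < t j)%N) p t.

Definition strictly_sst (R : realType) (n : nat) (p : 'S_n -> R) : Prop :=
  (forall i j k : 'I_n, 2^-1 <= pairwise_prob p i j -> 2^-1 <= pairwise_prob p j k ->
      2^-1 <= pairwise_prob p i k) /\
  (forall i j : 'I_n, (i < j)%N -> pairwise_prob p i j != 2^-1).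

Definition condlaw (R : realType) (d : measure_display) (Omega : measurableType d)
  (P : probability Omega R) (d' : measure_display) (T : measurableType d')
  (n : nat) (X : Omega -> T) (Sig : Omega -> 'S_n) (A : set T) : 'S_n -> R :=
  fun s => fine (P (X @^-1` A `&` Sig @^-1` [set s])) / fine (P (X @^-1` A)).

Definition prule (T : Type) (n K : nat) (C : 'I_K -> set T) (sb : 'I_K -> 'S_n)
  (x : T) : 'S_n :=
  if [pick k : 'I_K | `[< C k x >] ] is Some k then sb k else 1%g.

Definition risk (R : realType) (d : measure_display) (Omega : measurableType d)
  (P : probability Omega R) (d' : measure_display) (T : measurableType d')
  (n : nat) (X : Omega -> T) (Sig : Omega -> 'S_n) (s : T -> 'S_n) : \bar R :=
  (\int[P]_w ((dtau (s (X w)) (Sig w))%:R : R)%:E)%E.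

(* Main.v *)
Require Import Defs.
From HB Require Import structures.
From mathcomp Require Import all_boot all_order all_algebra all_fingroup.
From mathcomp Require Import all_classical all_reals all_analysis.
From mathcomp Require Import ring lra.
Import Order.TTheory GRing.Theory Num.Theory.
Set Implicit Arguments. Unset Strict Implicit. Unset Printing Implicit Defensive.
Local Open Scope ring_scope.
Section Comb.
Variables (R : realType) (n : nat).
Implicit Types (s t : 'S_n) (p : 'S_n -> R) (i j : 'I_n).

Lemma inset_bool (T : finType) (b : T -> bool) (x : T) :
  (x \in ([set y | b y]%classic : set T)) = b x.
Proof. by apply/idP/idP; rewrite in_setE. Qed.

Lemma dtauC s t : dtau s t = dtau t s.
Proof. by rewrite /dtau; apply: eq_card => ij; rewrite !inset_bool mulrC. Qed.

Lemma perm_lt_neq t i j : i != j -> (t i < t j)%N = ~~ (t j < t i)%N.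
Proof.
move=> nij; rewrite -leqNgt [(t i <= t j)%N]leq_eqVlt; case: eqP => //= e; have {}e := perm_inj (val_inj e).
by rewrite e eqxx in nij.
Qed.

Lemma disc_eq t s i j : i != j ->
  ((((t i)%:Z - (t j)%:Z) * ((s i)%:Z - (s j)%:Z) < 0)%R) =
  ((t i < t j)%N != (s i < s j)%N).
Proof.
move=> nij.
have nt : (t i)%:Z - (t j)%:Z != 0.
  by rewrite subr_eq0 eqz_nat val_eqE (inj_eq perm_inj).
have ns : (s i)%:Z - (s j)%:Z != 0.
  by rewrite subr_eq0 eqz_nat val_eqE (inj_eq perm_inj).
rewrite neq0_mulr_lt0 // !subr_lt0 !ltz_nat.
by case: (t i < t j)%N; case: (s i < s j)%N.
Qed.

Definition cc p s i j := if (s i < s j)%N then pairwise_prob p j i else pairwise_prob p i j.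

Lemma Lrisk_pairs p s : Lrisk p s =
  \sum_(ij : 'I_n * 'I_n | (ij.1 < ij.2)%N) cc p s ij.1 ij.2.
Proof.
rewrite /Lrisk.
under eq_bigr => t _.
  rewrite /dtau -sum1_card natr_sum mulr_sumr big_mkcond /=.
  over.
rewrite exchange_big /= [RHS]big_mkcond /=.
apply: eq_bigr => -[i j] _ /=.
case: ltnP => [ij|]; last first.
  by move=> ji; apply: big1 => t _; rewrite inset_bool /= ltnNge ji.
have nij : i != j by apply/eqP => E; rewrite E ltnn in ij.
rewrite /cc /pairwise_prob.
case: ifP => sij; rewrite [RHS]big_mkcond /=; apply: eq_bigr => t _;
  rewrite inset_bool /= ij /= disc_eq // sij ?mulr1 ?mulr0.
- by rewrite (perm_lt_neq t nij); case: (t j < t i)%N.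
- by case: (t i < t j)%N.
Qed.

Lemma pp_sum p i j : \sum_t p t = 1 -> i != j ->
  pairwise_prob p i j + pairwise_prob p j i = 1.
Proof.
move=> p1 nij; rewrite -p1 (bigID (fun t : 'S_n => (t i < t j)%N)) /=.
congr (_ + _); apply: eq_bigl => t.
by rewrite (perm_lt_neq t nij) negbK.
Qed.

Lemma pp_ii p i : pairwise_prob p i i = 0.
Proof. by rewrite /pairwise_prob big_pred0 // => t; rewrite ltnn. Qed.

Lemma card_ltord (k : nat) : (k <= n)%N -> #|[set m : 'I_n | (m < k)%N]| = k.
Proof.
move=> kn.
have -> : [set m : 'I_n | (m < k)%N] = [set widen_ord kn x | x in 'I_k].
  apply/setP => m; rewrite inE; apply/idP/imsetP.
    by move=> mk; exists (Ordinal mk) => //; apply: val_inj.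
  by case=> x _ ->; rewrite /= ltn_ord.
by rewrite card_imset ?card_ord //; by move=> x y /(congr1 val) /= e; apply: val_inj.
Qed.

Lemma rank_card s i : #|[set j | (s j < s i)%N]| = s i.
Proof.
have -> : [set j | (s j < s i)%N] = s @^-1: [set m : 'I_n | (m < s i)%N].
  by apply/setP => j; rewrite !inE.
by rewrite card_preimset ?card_ltord //; [exact: ltnW | exact: perm_inj].
Qed.

Lemma perm_eq_order s t : (forall i j, (s i < s j)%N = (t i < t j)%N) -> s = t.
Proof.
move=> H; apply/permP => i; apply: val_inj => /=.
rewrite -rank_card -[RHS]rank_card; apply: eq_card => j.
by rewrite !inE H.
Qed.

Section SST.
Variable p : 'S_n -> R.
Hypothesis p1 : \sum_t p t = 1.
Hypothesis sst : strictly_sst p.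
Let q := pairwise_prob p.
Definition beats i j := 2^-1 < q i j.

Lemma q_neq i j : i != j -> q i j != 2^-1.
Proof.
move=> nij; case: (ltngtP i j) => [ij|ji|e]; first exact: sst.2.
- have := sst.2 _ _ ji; have := pp_sum p1 nij; rewrite -/q => E.
  apply: contra => /eqP h; apply/eqP; lra.
- have e2 : i = j by apply: val_inj.
  by rewrite e2 eqxx in nij.
Qed.

Lemma beats_tot i j : i != j -> beats i j || beats j i.
Proof.
move=> nij; have := pp_sum p1 nij; have := q_neq nij; rewrite /beats -/q => nq E.
case: (ltgtP (q i j) 2^-1) => h; last by rewrite h eqxx in nq.
- apply/orP; right; lra.
- by [].
Qed.

Lemma beats_irr i : ~~ beats i i.
Proof. rewrite /beats /q pp_ii -leNgt; lra. Qed.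

Lemma beats_asym i j : beats i j -> ~~ beats j i.
Proof.
have [->|nij] := eqVneq i j; first by rewrite (negbTE (beats_irr j)).
have := pp_sum p1 nij; rewrite /beats -/q => E h; rewrite -leNgt; lra.
Qed.

Lemma beats_trans i j k : beats i j -> beats j k -> beats i k.
Proof.
move=> hij hjk.
have nik : i != k.
  by apply/eqP => e; subst k; move: (beats_asym hij); rewrite hjk.
have := sst.1 i j k (ltW hij) (ltW hjk); rewrite -/q => h.
by rewrite /beats lt_neqAle h andbT eq_sym (q_neq nik).
Qed.

Definition score i := #|[set l | beats l i]|.

Lemma score_lt i : (score i < n)%N.
Proof.
rewrite /score -[X in (_ < X)%N]card_ord -cardsT; apply: proper_card.
rewrite properT; apply/eqP => e.
have : i \in [set l | beats l i] by rewrite e inE.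
by rewrite inE (negbTE (beats_irr i)).
Qed.

Lemma score_mono i j : beats i j -> (score i < score j)%N.
Proof.
move=> hij; apply: proper_card; apply/properP; split.
  by apply/fintype.subsetP => l; rewrite !inE => h; exact: beats_trans h hij.
by exists i; rewrite !inE ?hij // (negbTE (beats_irr i)).
Qed.

Definition fsc i : 'I_n := Ordinal (score_lt i).

Lemma fsc_inj : injective fsc.
Proof.
move=> i j /(congr1 val) /= E; apply/eqP; apply/negPn/negP => nij.
by case/orP: (beats_tot nij) => /score_mono; rewrite E ltnn.
Qed.

Definition sstar : 'S_n := perm fsc_inj.

Lemma sstar_lt i j : i != j -> (sstar i < sstar j)%N = beats i j.
Proof.
move=> nij; rewrite !permE /=; apply/idP/idP => [h|/score_mono //].
case/orP: (beats_tot nij) => // /score_mono h'.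
by have := ltn_trans h h'; rewrite ltnn.
Qed.

Lemma cc_le s i j : i != j -> cc p sstar i j <= cc p s i j.
Proof.
move=> nij; have E := pp_sum p1 nij; have nq := q_neq nij.
rewrite /cc (sstar_lt nij) /beats -/q in E nq *.
have [h|h|h] := ltgtP (q i j) 2^-1; last by rewrite h eqxx in nq.
all: by case: ifP => _; lra.
Qed.

Lemma cc_lt s i j : i != j -> (s i < s j)%N != (sstar i < sstar j)%N ->
  cc p sstar i j < cc p s i j.
Proof.
move=> nij; have E := pp_sum p1 nij; have nq := q_neq nij.
rewrite /cc (sstar_lt nij) /beats -/q in E nq *.
have [h|h|h] := ltgtP (q i j) 2^-1; last by rewrite h eqxx in nq.
all: by case: ifP => //= _ _; lra.
Qed.

Lemma sstar_median : kemeny_median p sstar.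
Proof.
move=> s; rewrite !Lrisk_pairs; apply: ler_sum => -[i j] /= ij.
by apply: cc_le; apply/eqP => e; rewrite e ltnn in ij.
Qed.

Lemma median_unique s : kemeny_median p s -> s = sstar.
Proof.
move=> ms.
have agree : forall i j, (i < j)%N -> (s i < s j)%N = (sstar i < sstar j)%N.
  move=> i j ij.
  case: (boolP ((s i < s j)%N == (sstar i < sstar j)%N)) => [/eqP //|dis].
  exfalso.
  have nij : i != j by apply/eqP => e; rewrite e ltnn in ij.
  have := ms sstar; rewrite !Lrisk_pairs.
  rewrite (bigD1 (i, j)) //= [X in _ <= X](bigD1 (i, j)) //=.
  apply/negP; rewrite -ltNge; apply: ltr_leD; first exact: cc_lt.
  
  apply: ler_sum => -[k l] /andP [kl _]; apply: cc_le.
  by apply/eqP => e; rewrite e ltnn in kl.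
apply: perm_eq_order => i j.
case: (ltngtP i j) => [ij|ji|e]; first exact: agree.
- have nij : i != j by apply/eqP => e; rewrite e ltnn in ji.
  by rewrite (perm_lt_neq s nij) (perm_lt_neq sstar nij) agree.
- have -> : i = j by apply: val_inj.
  by rewrite !ltnn.
Qed.

End SST.

Lemma sst_unique p : \sum_t p t = 1 -> strictly_sst p ->
  exists s, kemeny_median p s /\ forall s', kemeny_median p s' -> s' = s.
Proof.
move=> p1 sst; exists (sstar p1 sst); split; first exact: sstar_median.
exact: median_unique.
Qed.

End Comb.

Local Open Scope classical_set_scope.
Local Open Scope ring_scope.

Section Meas.
Context (R : realType) (d : measure_display) (Omega : measurableType d)
  (P : probability Omega R).

Lemma int_sum_indic (I : finType) (c : I -> R) (A : I -> set Omega) :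
  (forall i, 0 <= c i) -> (forall i, measurable (A i)) ->
  (\int[P]_w (\sum_i c i * \1_(A i) w)%:E = \sum_i (c i)%:E * P (A i))%E.
Proof.
move=> c0 mA.
under eq_integral do rewrite -sumEFin.
rewrite ge0_integral_sum //.
- apply: eq_bigr => i _.
  under eq_integral do rewrite EFinM.
  rewrite (ge0_integralZl_EFin _ measurableT _ _ (c0 i)).
  + by rewrite integral_indic // setIT.
  + by move=> x _; rewrite lee_fin.
  + by apply/measurable_realfun.measurable_EFinP; exact: measurable_realfun.measurable_indic.
- move=> i; apply/measurable_realfun.measurable_EFinP.
  apply: measurable_realfun.measurable_funM => //; exact: measurable_realfun.measurable_indic.
- by move=> i x _; rewrite lee_fin mulr_ge0.
Qed.

Lemma indic_pre1 (S : finType) (Sig : Omega -> S) t w :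
  \1_(Sig @^-1` [set t]) w = (Sig w == t)%:R :> R.
Proof.
rewrite indicE; case: eqP => [<-|ne]; first by rewrite mem_set.
by rewrite memNset.
Qed.

End Meas.

Lemma prule_eq (T : Type) (n K : nat) (C : 'I_K -> set T) (sb : 'I_K -> 'S_n) x k :
  (forall k l : 'I_K, k != l -> C k `&` C l = set0) -> C k x -> prule C sb x = sb k.
Proof.
move=> disj Ck; rewrite /prule; case: pickP => [l /asboolP Cl | /(_ k)].
  case: (eqVneq l k) => [->//|nlk].
  have H : (C l `&` C k) x by [].
  by rewrite (disj l k nlk) in H.
by rewrite asboolT.
Qed.

Lemma exists_argmin (R : realType) (n : nat) (f : 'S_n -> R) :
  exists s, forall t, f s <= f t.
Proof.
case: (@arg_minP _ _ _ 1%g xpredT f isT) => s _ hs.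
by exists s => t; exact: hs.
Qed.

Lemma median_Lstar (R : realType) (n : nat) (p : 'S_n -> R) s :
  kemeny_median p s -> Lstar p = Lrisk p s.
Proof.
move=> ms; apply/eqP; rewrite eq_le; apply/andP; split.
  exact: bigmin_le.
by apply: le_bigmin => // t _; exact: ms.
Qed.

Theorem proposition8 (R : realType) (n K : nat)
  (d : measure_display) (Omega : measurableType d) (P : probability Omega R)
  (d' : measure_display) (T : measurableType d')
  (X : Omega -> T) (Sig : Omega -> 'S_n) (C : 'I_K -> set T)
  (mX : measurable_fun setT X)
  (mSig : forall s : 'S_n, measurable (Sig @^-1` [set s]))
  (K_gt0 : (0 < K)%N)
  (mC : forall k, measurable (C k))
  (disjC : forall k l : 'I_K, k != l -> C k `&` C l = set0)
  (coverC : forall x : T, exists k : 'I_K, C k x)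
  (posC : forall k, (0 < P (X @^-1` C k))%E) :
  let PC := fun k => condlaw P X Sig (C k) in
  let Rk := fun sb : 'I_K -> 'S_n => risk P X Sig (prule C sb) in
  let minimizer := fun sb => forall sb' : 'I_K -> 'S_n, (Rk sb <= Rk sb')%E in
  (forall sb : 'I_K -> 'S_n, minimizer sb <-> forall k, kemeny_median (PC k) (sb k)) /\
  (exists sb, minimizer sb) /\
  (forall sb, minimizer sb ->
     Rk sb = (\sum_(k < K) P (X @^-1` C k) * (Lstar (PC k))%:E)%E) /\
  ((forall k, strictly_sst (PC k)) ->
     exists sstar : 'I_K -> 'S_n,
       (forall k, kemeny_median (PC k) (sstar k) /\
          forall s, kemeny_median (PC k) s -> s = sstar k) /\
       minimizer sstar /\
       (forall sb, minimizer sb -> prule C sb = prule C sstar)).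
Proof.
move=> PC Rk minimizer.
have mXC k : measurable (X @^-1` C k).
  by have := mX measurableT (C k) (mC k); rewrite setTI.
pose A k t := X @^-1` C k `&` Sig @^-1` [set t].
have mA k t : measurable (A k t) by apply: measurableI.
pose a k t := fine (P (A k t)).
pose m k := fine (P (X @^-1` C k)).
have PA k t : P (A k t) = (a k t)%:E by rewrite fineK // fin_num_measure.
have PXC k : P (X @^-1` C k) = (m k)%:E by rewrite fineK // fin_num_measure.
have mpos k : 0 < m k by rewrite -lte_fin -PXC.
have a0 k t : 0 <= a k t by rewrite /a fine_ge0.
have PCE k t : PC k t = a k t / m k by [].
have tot k : \sum_t a k t = m k.
  apply/EFin_inj; rewrite -PXC -sumEFin.
  apply/esym; rewrite -[in LHS](setIT (X @^-1` C k)) -integral_indic //.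
  transitivity (\int[P]_w (\sum_t 1 * \1_(A k t) w)%:E)%E.
    apply: eq_integral => w _; congr (_%:E).
    rewrite (bigD1 (Sig w)) //= big1 => [|t nt].
      rewrite addr0 mul1r !indicE; congr (_%:R).
      case: (boolP (w \in X @^-1` C k)) => h.
        by rewrite mem_set //; split => //; exact: set_mem h.
      by rewrite memNset // => -[h' _]; move: h; rewrite mem_set.
    rewrite mul1r indicE memNset //; case=> _ /= e.
    by rewrite e eqxx in nt.
  rewrite int_sum_indic //; apply: eq_bigr => t _; by rewrite mul1e PA.
pose G sb := \sum_k m k * Lrisk (PC k) (sb k).
have RkE sb : Rk sb = (G sb)%:E.
  rewrite /Rk /risk.
  transitivity (\int[P]_w (\sum_(kt : 'I_K * 'S_n)
      (dtau (sb kt.1) kt.2)%:R * \1_(A kt.1 kt.2) w)%:E)%E.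
    apply: eq_integral => w _; congr (_%:E).
    have [k0 Ck0] := coverC (X w).
    rewrite (prule_eq sb disjC Ck0) (bigD1 (k0, Sig w)) //= big1 => [|[k t] /= nkt].
      by rewrite indicE mem_set ?mulr1 ?addr0.
    rewrite indicE memNset ?mulr0 //; case=> /= Ck e.
    move: nkt; rewrite xpair_eqE e eqxx andbT => nk.
    have H : (C k `&` C k0) (X w) by [].
    by rewrite (disjC _ _ nk) in H.
  rewrite int_sum_indic //.
  under eq_bigr do rewrite PA -EFinM.
  rewrite sumEFin -(pair_bigA _ (fun k t => (dtau (sb k) t)%:R * a k t)) /=.
  congr (_%:E); apply: eq_bigr => k _.
  rewrite /Lrisk mulr_sumr; apply: eq_bigr => t _.
  rewrite PCE dtauC; have := mpos k; move: (m k) => mk mk0.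
  by field; rewrite gt_eqF.
have minE sb : minimizer sb <-> forall sb', G sb <= G sb'.
  by split => h sb'; have := h sb'; rewrite !RkE lee_fin.
have part1 sb : minimizer sb <-> forall k, kemeny_median (PC k) (sb k).
  rewrite minE; split.
    move=> h k t.
    have := h (fun j => if j == k then t else sb j).
    rewrite /G (bigD1 k) //= [X in _ <= X](bigD1 k) //= eqxx.
    have -> : \sum_(j < K | j != k) m j * Lrisk (PC j) (if j == k then t else sb j)
      = \sum_(j < K | j != k) m j * Lrisk (PC j) (sb j).
      by apply: eq_bigr => j /negbTE ->.
    by rewrite lerD2r ler_pM2l.
  move=> h sb'; apply: ler_sum => k _; apply: ler_wpM2l; first exact: ltW.
  exact: h.
split; first exact: part1.
split.
  have [sb hsb] := choice (fun k => exists_argmin (Lrisk (PC k))).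
  by exists sb; apply/part1 => k t; exact: hsb.
split.
  move=> sb /part1 h; rewrite RkE /G -sumEFin; apply: eq_bigr => k _.
  by rewrite PXC (median_Lstar (h k)) EFinM.
move=> sst.
have PC1 k : \sum_t PC k t = 1.
  under eq_bigr do rewrite PCE.
  by rewrite -mulr_suml tot mulfV // gt_eqF.
have [ss hss] := choice (fun k => sst_unique (PC1 k) (sst k)).
exists ss; split; first exact: hss.
split; first by apply/part1 => k; exact: (hss k).1.
move=> sb /part1 h.
have -> // : sb = ss.
by apply: funext => k; exact: (hss k).2.
Qed.
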